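(* Let $X$ be a quasi-lattice and $x,y\in X$. Then $x+y\le\lceil x\rceil+\lceil y\rceil$ and $-(x+y)\le\lceil x\rceil+\lceil y\rceil$; moreover, each of $x-\lceil y\rceil$, $-x-\lceil y\rceil$, $y-\lceil x\rceil$, $-y-\lceil x\rceil$ is $\le\lceil x+y\rceil$ and $\le\lceil x-y\rceil$.
   Context: A pre-ordered Banach space is a real Banach space $X$ with a cone $X_+$ ($X_++X_+\subseteq X_+$, $\lambda X_+\subseteq X_+$ for $\lambda\ge0$); $x\le y$ means $y-x\in X_+$. For $A\subseteq X$, $\upsilon(A)$ is the set of upper bounds of $A$ and $\mu(A)$ the set of minimal upper bounds. Let $\sigma_{x,y}(z)=\|z-x\|+\|z-y\|$. A pre-ordered Banach space with closed cone is a $\upsilon$-quasi-lattice (resp. $\mu$-quasi-lattice) if for all $x,y$ the set $\upsilon(\{x,y\})$ (resp. $\mu(\{x,y\})$) is non-empty and contains a unique minimizer of $\sigma_{x,y}$ over that set, called the quasi-supremum $x\tilde\vee y$. A quasi-lattice is either of these. Define $\lceil x\rceil:=(-x)\tilde\vee x$. *)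

(* Defs.v *)
From mathcomp Require Import all_boot all_order all_algebra.
From mathcomp Require Import all_classical all_reals all_analysis.
Import Order.TTheory GRing.Theory Num.Theory.
Import numFieldNormedType.Exports.
Set Implicit Arguments. Unset Strict Implicit. Unset Printing Implicit Defensive.
Local Open Scope classical_set_scope.
Local Open Scope ring_scope.

Section QuasiLattice.
Variables (R : realType) (V : completeNormedModType R).

Definition is_cone (C : set V) : Prop :=
  (forall a b, C a -> C b -> C (a + b)) /\
  (forall (l : R) a, 0 <= l -> C a -> C (l *: a)).

Definition cle (C : set V) (x y : V) : Prop := C (y - x).

Definition ubounds (C : set V) (A : set V) : set V :=
  [set z | forall a, A a -> cle C a z].

Definition min_ubounds (C : set V) (A : set V) : set V :=
  [set z | ubounds C A z /\
           (forall w, ubounds C A w -> cle C w z -> w = z)].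

Inductive qkind := Upsilon | Mu.

Definition bset (k : qkind) (C : set V) (A : set V) : set V :=
  match k with Upsilon => ubounds C A | Mu => min_ubounds C A end.

Definition sigma (x y z : V) : R := `|z - x| + `|z - y|.

Definition sigma_min (S : set V) (x y z : V) : Prop :=
  S z /\ forall w, S w -> sigma x y z <= sigma x y w.

Definition is_qsup (k : qkind) (C : set V) (x y z : V) : Prop :=
  sigma_min (bset k C [set x; y]) x y z /\
  forall w, sigma_min (bset k C [set x; y]) x y w -> w = z.

Definition quasi_lattice (k : qkind) (C : set V) : Prop :=
  is_cone C /\ closed C /\
  forall x y, (bset k C [set x; y] !=set0) /\ exists z, is_qsup k C x y z.

(* the quasi-supremum x ~v y (meaningful when quasi_lattice k C holds) *)
Definition qsup (k : qkind) (C : set V) (x y : V) : V :=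
  xget 0 [set z | is_qsup k C x y z].

Definition qceil (k : qkind) (C : set V) (x : V) : V := qsup k C (- x) x.

End QuasiLattice.

(* Main.v *)
Require Import Defs.
From mathcomp Require Import all_boot all_order all_algebra.
From mathcomp Require Import all_classical all_reals all_analysis.
Import Order.TTheory GRing.Theory Num.Theory.
Import numFieldNormedType.Exports.
Local Open Scope classical_set_scope.
Local Open Scope ring_scope.

Lemma K1 (V : zmodType) (a u w : V) : a + u + w - u = a + w.
Proof. by rewrite addrAC addrK. Qed.
Lemma K2 (V : zmodType) (a u w : V) : a - u + w + u = a + w.
Proof. by rewrite addrAC subrK. Qed.
Lemma K3 (V : zmodType) (a u v w : V) : a + u + v + w - u = a + v + w.
Proof. by rewrite (addrAC a u v) (addrAC (a+v) u w) addrK. Qed.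
Lemma K4 (V : zmodType) (a u v w : V) : a - u + v + w + u = a + v + w.
Proof. by rewrite (addrAC a (-u) v) (addrAC (a+v) (-u) w) subrK. Qed.

Lemma ceil_ub (R : realType) (V : completeNormedModType R)
  (C : set V) (k : qkind) (hQL : quasi_lattice k C) (z : V) :
  C (qceil k C z - z) /\ C (qceil k C z + z).
Proof.
case: hQL => _ [_ H].
have [_ ex] := H (- z) z.
have [[Hs _] _] := xgetPex 0 ex.
have ub : ubounds C [set - z; z] (qceil k C z).
  by case: k H ex Hs => /= _ _ // [].
split.
- by apply: (ub z); right.
- have := ub (- z) (or_introl erefl); by rewrite /cle opprK.
Qed.

Ltac T := rewrite !(opprD, opprK, addrA) ?K1 ?K2 ?K3 ?K4.

Lemma pure (V : zmodType) (C : set V)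
  (Cadd : forall a b : V, C a -> C b -> C (a + b)) (x y p q s d : V)
  (x1 : C (p - x)) (x2 : C (p + x)) (y1 : C (q - y)) (y2 : C (q + y))
  (s1 : C (s - (x + y))) (s2 : C (s + (x + y)))
  (d1 : C (d - (x - y))) (d2 : C (d + (x - y))) :
  C (p + q - (x + y)) /\ C (p + q - (- (x + y))) /\
  (C (s - (x - q)) /\ C (d - (x - q))) /\
  (C (s - (- x - q)) /\ C (d - (- x - q))) /\
  (C (s - (y - p)) /\ C (d - (y - p))) /\
  (C (s - (- y - p)) /\ C (d - (- y - p))).
Proof.
have E : forall a b u, C a -> C b -> u = a + b -> C u.
  by move=> a b u Ha Hb ->; apply: Cadd.
split; first by apply: (E _ _ _ x1 y1); rewrite opprD addrACA.
split; first by apply: (E _ _ _ x2 y2); rewrite opprK addrACA.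
split; first by split; [apply: (E _ _ _ s1 y2)|apply: (E _ _ _ d1 y1)]; T.
split; first by split; [apply: (E _ _ _ s2 y1)|apply: (E _ _ _ d2 y2)]; T.
split; first by split; [apply: (E _ _ _ s1 x2)|apply: (E _ _ _ d2 x1)]; T.
by split; [apply: (E _ _ _ s2 x1)|apply: (E _ _ _ d1 x2)]; T.
Qed.

Theorem theorem5p11 (R : realType) (V : completeNormedModType R)
  (C : set V) (k : qkind) (hQL : quasi_lattice k C) (x y : V) :
  let c := qceil k C in
  cle C (x + y) (c x + c y) /\
  cle C (- (x + y)) (c x + c y) /\
  (cle C (x - c y) (c (x + y)) /\ cle C (x - c y) (c (x - y))) /\
  (cle C (- x - c y) (c (x + y)) /\ cle C (- x - c y) (c (x - y))) /\
  (cle C (y - c x) (c (x + y)) /\ cle C (y - c x) (c (x - y))) /\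
  (cle C (- y - c x) (c (x + y)) /\ cle C (- y - c x) (c (x - y))).
Proof.
move=> c.
have [[Cadd _] _] := hQL.
have [x1 x2] := ceil_ub _ _ _ _ hQL x.
have [y1 y2] := ceil_ub _ _ _ _ hQL y.
have [s1 s2] := ceil_ub _ _ _ _ hQL (x + y).
have [d1 d2] := ceil_ub _ _ _ _ hQL (x - y).
have H := @pure _ _ Cadd x y _ _ _ _ x1 x2 y1 y2 s1 s2 d1 d2. rewrite /cle /c. exact H.
Qed.
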